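(* Let $PS = D \cup LP \cup MP \cup IC$ be a P2P system such that no negation occurs in $LP$. Then the relation $\sqsupseteq$ (max-min preferability) is a partial order on the set of weak models of $PS$.
   Context: Peer atoms: a peer identifier is a positive integer; a peer atom is $i\!:\!p(t_1,\dots,t_k)$ with $i$ a peer identifier, $p$ a predicate and $t_j$ terms; $i\!:\!p$ is a peer predicate. A literal is an atom $A$ or its negation-as-failure $not\ A$. Built-in atoms are $X\,\theta\,Y$ with $\theta\in\{<,>,\le,\ge,=,\neq\}$. Rules (all safe): a standard rule $H\leftarrow \mathcal B$; an integrity constraint $\leftarrow \mathcal B$; a maximal mapping rule $i\!:\!h(X) \leftharpoonup j\!:\!(p_1(X_1),\dots,p_m(X_m),\varphi)$ with $i\neq j$; a minimal mapping rule, identical but with $\leftharpoondown$. A peer $P_i=\langle D_i,LP_i,MP_i,IC_i\rangle$ consists of a finite set $D_i$ of ground atoms with identifier $i$, a finite set $LP_i$ of standard rules all of whose atoms have identifier $i$, a finite set $MP_i$ of mapping rules with head identifier $i$, and a finite set $IC_i$ of integrity constraints over atoms with identifier $i$. A P2P system is a set $PS=\{P_1,\dots,P_n\}$ of peers in which every source identifier of a mapping rule lies in $[1..n]$; $D,LP,MP,IC$ are the unions of the components, and $PS$ is identified with $D\cup LP\cup MP\cup IC$. A predicate is derived if it heads a standard rule, a mapping predicate if it heads a mapping rule, base otherwise; each predicate has exactly one type and each mapping predicate heads exactly one mapping rule. Semantics: interpretation = set of ground peer atoms; $A$ true iff $A\in M$, $not\ A$ true iff $A\notin M$; a standard rule is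 satisfied iff its body is false or its head true; a constraint iff its body is false. $MM(\Pi)$ = inclusion-minimal models. $St(r)$ turns a mapping rule with head $H$, body $\mathcal B$ into $H\leftarrow\mathcal B$. $M$ is a weak model of $PS$ if $\{M\}=MM(St(PS^M))$, where $PS^M$ is obtained from $ground(PS)$ by removing every rule whose body contains $not\ A$ with $A\in M$, deleting negative literals from the remaining rules, and removing every ground mapping rule whose head is not in $M$. $M[\overline{MP}]$ (resp. $M[\underline{MP}]$) is the set of atoms of $M$ whose predicate heads a maximal (resp. minimal) mapping rule. For weak models $M,N$: $M\sqsupseteq N$ iff either $M[\overline{MP}]\supsetneq N[\overline{MP}]$, or $M[\overline{MP}]=N[\overline{MP}]$ and $M[\underline{MP}]\subseteq N[\underline{MP}]$. *)

(* Defs.v *)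
From Stdlib Require Import List Arith.
Import ListNotations.
Set Implicit Arguments.

Section P2P.
Variable C : Type.              (* constants (Herbrand universe) *)
Variable le : C -> C -> Prop.   (* order used to interpret built-ins *)

Inductive term := TVar (x : nat) | TConst (c : C).

Record atom := Atom { a_peer : nat; a_pred : nat; a_args : list term }.

Record gatom := GAtom { g_peer : nat; g_pred : nat; g_args : list C }.

Inductive cmp := CLt | CGt | CLe | CGe | CEq | CNeq.
Record builtin := Builtin { b_op : cmp; b_lhs : term; b_rhs : term }.

Inductive literal := LPos (A : atom) | LNeg (A : atom) | LBi (b : builtin).

(* mapping rule  i:h(X) <- j:(p_1(X_1),...,p_m(X_m), phi):
   the body atoms are given as (p_k, X_k) and are read as j:p_k(X_k) *)
Inductive rule :=
| RStd (H : atom) (B : list literal)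
| RIC (B : list literal)
| RMax (H : atom) (j : nat) (B : list (nat * list term)) (phi : list builtin)
| RMin (H : atom) (j : nat) (B : list (nat * list term)) (phi : list builtin).

Record peer := Peer { pD : list gatom; pLP : list rule; pMP : list rule; pIC : list rule }.

Definition term_vars (t : term) : list nat :=
  match t with TVar x => [x] | TConst _ => [] end.
Definition args_vars (ts : list term) : list nat := flat_map term_vars ts.
Definition atom_vars (A : atom) : list nat := args_vars (a_args A).
Definition bi_vars (b : builtin) : list nat := term_vars (b_lhs b) ++ term_vars (b_rhs b).
Definition lit_vars (l : literal) : list nat :=
  match l with LPos A | LNeg A => atom_vars A | LBi b => bi_vars b end.
Definition lit_atom_peer_ok (i : nat) (l : literal) : Prop :=
  match l with LPos A | LNeg A => a_peer A = i | LBi _ => True end.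

Definition safe_body (hv : list nat) (B : list literal) : Prop :=
  forall x, (In x hv \/ exists l, In l B /\ In x (lit_vars l)) ->
            exists A, In (LPos A) B /\ In x (atom_vars A).
Definition safe_map (H : atom) (B : list (nat * list term)) (phi : list builtin) : Prop :=
  forall x, (In x (atom_vars H) \/ exists b, In b phi /\ In x (bi_vars b)) ->
            exists pa, In pa B /\ In x (args_vars (snd pa)).
Definition safe (r : rule) : Prop :=
  match r with
  | RStd H B => safe_body (atom_vars H) B
  | RIC B => safe_body [] B
  | RMax H _ B phi | RMin H _ B phi => safe_map H B phi
  end.

Definition wf_peer (n i : nat) (P : peer) : Prop :=
  0 < i /\
  (forall a, In a (pD P) -> g_peer a = i) /\
  (forall r, In r (pLP P) -> safe r /\ exists H B, r = RStd H B /\ a_peer H = i /\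
        forall l, In l B -> lit_atom_peer_ok i l) /\
  (forall r, In r (pMP P) -> safe r /\ exists H j B phi,
        (r = RMax H j B phi \/ r = RMin H j B phi) /\ a_peer H = i /\ i <> j /\
        1 <= j <= n) /\
  (forall r, In r (pIC P) -> safe r /\ exists B, r = RIC B /\
        forall l, In l B -> lit_atom_peer_ok i l).

Definition allD (PS : list peer) : list gatom := flat_map pD PS.
Definition allLP (PS : list peer) : list rule := flat_map pLP PS.
Definition allMP (PS : list peer) : list rule := flat_map pMP PS.
Definition allIC (PS : list peer) : list rule := flat_map pIC PS.
Definition allRules (PS : list peer) : list rule := allLP PS ++ allMP PS ++ allIC PS.

(* peer predicate i:p is represented by the pair (i, p) *)
Definition ppred (A : atom) : nat * nat := (a_peer A, a_pred A).

Definition is_derived (PS : list peer) (q : nat * nat) : Prop :=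
  exists H B, In (RStd H B) (allLP PS) /\ ppred H = q.
Definition map_head (r : rule) : option atom :=
  match r with RMax H _ _ _ | RMin H _ _ _ => Some H | _ => None end.
Definition is_mapping (PS : list peer) (q : nat * nat) : Prop :=
  exists r H, In r (allMP PS) /\ map_head r = Some H /\ ppred H = q.
Definition is_max_mapping (PS : list peer) (q : nat * nat) : Prop :=
  exists H j B phi, In (RMax H j B phi) (allMP PS) /\ ppred H = q.
Definition is_min_mapping (PS : list peer) (q : nat * nat) : Prop :=
  exists H j B phi, In (RMin H j B phi) (allMP PS) /\ ppred H = q.

(* PS = {P_1,...,P_n}: the k-th element of the list (0-based) is the peer
   with identifier k+1 *)
Definition p2p_system (PS : list peer) : Prop :=
  (forall k P, nth_error PS k = Some P -> wf_peer (length PS) (S k) P) /\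
  (forall q, ~ (is_derived PS q /\ is_mapping PS q)) /\
  (forall r1 r2 H1 H2, In r1 (allMP PS) -> In r2 (allMP PS) ->
      map_head r1 = Some H1 -> map_head r2 = Some H2 -> ppred H1 = ppred H2 -> r1 = r2).

Definition no_negation_LP (PS : list peer) : Prop :=
  forall H B A, In (RStd H B) (allLP PS) -> ~ In (LNeg A) B.

Definition gterm (s : nat -> C) (t : term) : C :=
  match t with TVar x => s x | TConst c => c end.
Definition gatom_of (s : nat -> C) (A : atom) : gatom :=
  GAtom (a_peer A) (a_pred A) (map (gterm s) (a_args A)).

Definition eval_cmp (op : cmp) (x y : C) : Prop :=
  match op with
  | CLt => le x y /\ x <> y
  | CGt => le y x /\ x <> y
  | CLe => le x y
  | CGe => le y x
  | CEq => x = y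
  | CNeq => x <> y
  end.
Definition eval_bi (s : nat -> C) (b : builtin) : Prop :=
  eval_cmp (b_op b) (gterm s (b_lhs b)) (gterm s (b_rhs b)).

Inductive rkind := KStd | KIC | KMap.

(* a ground rule: head (None for a constraint), positive body atoms,
   negated body atoms, and the truth value of its ground built-in atoms *)
Record grule := GRule { gr_kind : rkind; gr_head : option gatom;
                        gr_pos : list gatom; gr_neg : list gatom; gr_bi : Prop }.

Fixpoint pos_atoms (B : list literal) : list atom :=
  match B with [] => [] | LPos A :: B' => A :: pos_atoms B' | _ :: B' => pos_atoms B' end.
Fixpoint neg_atoms (B : list literal) : list atom :=
  match B with [] => [] | LNeg A :: B' => A :: neg_atoms B' | _ :: B' => neg_atoms B' end.
Fixpoint bis (B : list literal) : list builtin :=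
  match B with [] => [] | LBi b :: B' => b :: bis B' | _ :: B' => bis B' end.

Definition ground_rule (s : nat -> C) (r : rule) : grule :=
  match r with
  | RStd H B => GRule KStd (Some (gatom_of s H)) (map (gatom_of s) (pos_atoms B))
                  (map (gatom_of s) (neg_atoms B)) (Forall (eval_bi s) (bis B))
  | RIC B => GRule KIC None (map (gatom_of s) (pos_atoms B))
                  (map (gatom_of s) (neg_atoms B)) (Forall (eval_bi s) (bis B))
  | RMax H j B phi | RMin H j B phi =>
      GRule KMap (Some (gatom_of s H))
        (map (fun pa => gatom_of s (Atom j (fst pa) (snd pa))) B) []
        (Forall (eval_bi s) phi)
  end.

Definition fact (a : gatom) : grule := GRule KStd (Some a) [] [] True.

Definition ground (PS : list peer) (g : grule) : Prop :=
  (exists a, In a (allD PS) /\ g = fact a) \/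
  (exists r s, In r (allRules PS) /\ g = ground_rule s r).

Definition interp := gatom -> Prop.

(* positive ground standard rule / constraint (result of St) *)
Record prule := PRule { pr_head : option gatom; pr_pos : list gatom; pr_bi : Prop }.

Definition St_reduct (PS : list peer) (M : interp) (p : prule) : Prop :=
  exists g, ground PS g /\
    (forall a, In a (gr_neg g) -> ~ M a) /\
    (gr_kind g = KMap -> exists h, gr_head g = Some h /\ M h) /\
    p = PRule (gr_head g) (gr_pos g) (gr_bi g).

Definition sat (M : interp) (p : prule) : Prop :=
  ((forall a, In a (pr_pos p) -> M a) /\ pr_bi p) ->
  match pr_head p with Some h => M h | None => False end.

Definition is_model (P : prule -> Prop) (M : interp) : Prop :=
  forall p, P p -> sat M p.

Definition subset (A B : interp) : Prop := forall a, A a -> B a.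

Definition minimal_model (P : prule -> Prop) (M : interp) : Prop :=
  is_model P M /\ forall N, is_model P N -> subset N M -> subset M N.

Definition weak_model (PS : list peer) (M : interp) : Prop :=
  minimal_model (St_reduct PS M) M /\
  forall N, minimal_model (St_reduct PS M) N -> N = M.

Definition restrict (M : interp) (sel : nat * nat -> Prop) : interp :=
  fun a => M a /\ sel (g_peer a, g_pred a).

(* M [= N  (M is max-min preferable to N) *)
Definition pref (PS : list peer) (M N : interp) : Prop :=
  let Mx := restrict M (is_max_mapping PS) in
  let Nx := restrict N (is_max_mapping PS) in
  let Mn := restrict M (is_min_mapping PS) in
  let Nn := restrict N (is_min_mapping PS) in
  (subset Nx Mx /\ ~ subset Mx Nx) \/
  ((forall a, Mx a <-> Nx a) /\ subset Mn Nn).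

End P2P.

Definition partial_order_on {T : Type} (S : T -> Prop) (R : T -> T -> Prop) : Prop :=
  (forall x, S x -> R x x) /\
  (forall x y, S x -> S y -> R x y -> R y x -> x = y) /\
  (forall x y z, S x -> S y -> S z -> R x y -> R y z -> R x z).

(* Main.v *)
Require Import Defs.
From Stdlib Require Import List.
Import ListNotations.

Section Aux.
Variable C : Type.
Variable le : C -> C -> Prop.

Lemma in_all_peer (PS : list (peer C)) (f : peer C -> list (rule C)) r :
  In r (flat_map f PS) -> exists k P, nth_error PS k = Some P /\ In r (f P).
Proof.
  intro H. apply in_flat_map in H as [P [HP Hr]].
  apply In_nth_error in HP as [k Hk]. eauto.
Qed.

Lemma LP_std (PS : list (peer C)) r : p2p_system PS -> In r (allLP PS) -> exists H B, r = RStd H B.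
Proof.
  intros [Hwf _] Hin. apply in_all_peer in Hin as [k [P [Hk Hr]]].
  destruct (Hwf k P Hk) as [_ [_ [HLP _]]].
  destruct (HLP r Hr) as [_ [H [B [E _]]]]. eauto.
Qed.

Lemma MP_map (PS : list (peer C)) r : p2p_system PS -> In r (allMP PS) ->
  exists H j B phi, r = RMax H j B phi \/ r = RMin H j B phi.
Proof.
  intros [Hwf _] Hin. apply in_all_peer in Hin as [k [P [Hk Hr]]].
  destruct (Hwf k P Hk) as [_ [_ [_ [HMP _]]]].
  destruct (HMP r Hr) as [_ [H [j [B [phi [E _]]]]]]. eauto 10.
Qed.

Lemma IC_ic (PS : list (peer C)) r : p2p_system PS -> In r (allIC PS) -> exists B, r = RIC B.
Proof.
  intros [Hwf _] Hin. apply in_all_peer in Hin as [k [P [Hk Hr]]].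
  destruct (Hwf k P Hk) as [_ [_ [_ [_ HIC]]]].
  destruct (HIC r Hr) as [_ [B [E _]]]. eauto.
Qed.

Lemma neg_nil (B : list (literal C)) : (forall A, ~ In (LNeg A) B) -> neg_atoms B = [].
Proof.
  induction B as [|l B IH]; intro H; simpl; auto.
  destruct l as [a|a|b].
  - apply IH. intros A0 HA. apply (H A0). simpl; auto.
  - exfalso. apply (H a). simpl; auto.
  - apply IH. intros A0 HA. apply (H A0). simpl; auto.
Qed.

Lemma reduct_transfer (PS : list (peer C)) (M N : interp C) p h :
  p2p_system PS -> no_negation_LP PS ->
  (forall a, restrict M (is_max_mapping PS) a -> N a) ->
  (forall a, restrict M (is_min_mapping PS) a -> N a) ->
  pr_head p = Some h ->
  St_reduct le PS M p -> St_reduct le PS N p.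
Proof.
  intros Hsys Hnn Hx Hn Hh [g [Hg [Hneg [Hk Hp]]]].
  exists g. split; [exact Hg|]. split; [|split; [|exact Hp]].
  - destruct Hg as [[a [_ E]] | [r [s [Hr E]]]].
    + subst g. simpl. tauto.
    + apply in_app_or in Hr as [Hr|Hr].
      * destruct (LP_std _ _ Hsys Hr) as [H [B E']]. subst r g. simpl.
        rewrite (neg_nil B (fun A => Hnn H B A Hr)). simpl. tauto.
      * apply in_app_or in Hr as [Hr|Hr].
        -- destruct (MP_map _ _ Hsys Hr) as [H [j [B [phi [E'|E']]]]]; subst r g; simpl; tauto.
        -- destruct (IC_ic _ _ Hsys Hr) as [B E']. subst r g p. simpl in Hh. discriminate.
  - intro Hkind. destruct (Hk Hkind) as [h' [Eh Mh]]. exists h'. split; [exact Eh|].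
    destruct Hg as [[a [_ E]] | [r [s [Hr E]]]].
    + subst g. discriminate.
    + apply in_app_or in Hr as [Hr|Hr].
      * destruct (LP_std _ _ Hsys Hr) as [H [B E']]. subst r g. discriminate.
      * apply in_app_or in Hr as [Hr|Hr].
        -- destruct (MP_map _ _ Hsys Hr) as [H [j [B [phi [E'|E']]]]]; subst r g;
           simpl in Eh; injection Eh as <-.
           ++ apply Hx. split; [exact Mh|]. exists H, j, B, phi. split; [exact Hr|reflexivity].
           ++ apply Hn. split; [exact Mh|]. exists H, j, B, phi. split; [exact Hr|reflexivity].
        -- destruct (IC_ic _ _ Hsys Hr) as [B E']. subst r g. discriminate.
Qed.

Definition least (P : prule C -> Prop) : interp C :=
  fun a => forall K, (forall p h, P p -> pr_head p = Some h -> sat K p) -> K a.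

Lemma least_minimal (P P' : prule C -> Prop) (N : interp C) :
  (forall p h, pr_head p = Some h -> (P p <-> P' p)) ->
  is_model P' N -> minimal_model P' (least P).
Proof.
  intros Heq HN.
  assert (Hsub : forall K, is_model P' K -> subset (least P) K).
  { intros K HK a Ha. apply Ha. intros p h Hp E. apply HK. apply (Heq p h E), Hp. }
  split.
  - intros p Hp [Hpos Hbi].
    destruct (pr_head p) as [h|] eqn:E.
    + intros K HK. pose proof (HK p h (proj2 (Heq p h E) Hp) E) as HK'.
      unfold sat in HK'. rewrite E in HK'.
      apply HK'. split; [|exact Hbi]. intros a Ha. exact (Hpos a Ha K HK).
    + pose proof (HN p Hp) as H'. unfold sat in H'. rewrite E in H'.
      apply H'. split; [|exact Hbi]. intros a Ha. exact (Hsub N HN a (Hpos a Ha)).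
  - intros K HK _. apply Hsub, HK.
Qed.
End Aux.

Theorem proposition4 (C : Type) (le : C -> C -> Prop) (PS : list (peer C)) :
  p2p_system PS -> no_negation_LP PS ->
  partial_order_on (weak_model le PS) (pref PS).
Proof.
  intros Hsys Hnn. split; [|split].
  - intros x _. right. split; [tauto|]. intros a Ha; exact Ha.
  - intros M N HM HN H1 H2.
    assert (Hx : (forall a, restrict M (is_max_mapping PS) a -> N a) /\ (forall a, restrict N (is_max_mapping PS) a -> M a)).
    { unfold pref in H1, H2. unfold subset in *.
      destruct H1 as [[A1 B1]|[A1 B1]]; destruct H2 as [[A2 B2]|[A2 B2]].
      - tauto.
      - exfalso. apply B1. intros a Ha. apply A2, Ha.
      - exfalso. apply B2. intros a Ha. apply A1, Ha.
      - split; intros a Ha; [apply (proj1 (A1 a) Ha)|apply (proj2 (A1 a) Ha)]. }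
    assert (Hn : (forall a, restrict M (is_min_mapping PS) a -> N a) /\ (forall a, restrict N (is_min_mapping PS) a -> M a)).
    { unfold pref in H1, H2. unfold subset in *.
      destruct H1 as [[A1 B1]|[A1 B1]]; destruct H2 as [[A2 B2]|[A2 B2]].
      - exfalso. apply B1. intros a Ha. apply A2, Ha.
      - exfalso. apply B1. intros a Ha. apply A2, Ha.
      - exfalso. apply B2. intros a Ha. apply A1, Ha.
      - split; intros a Ha; [apply (B1 a Ha)|apply (B2 a Ha)]. }
    destruct Hx as [HxMN HxNM]. destruct Hn as [HnMN HnNM].
    assert (Heq : forall p h, pr_head p = Some h ->
              (St_reduct le PS M p <-> St_reduct le PS N p)).
    { intros p h E. split; intro Hp.
      - exact (reduct_transfer _ _ _ _ _ _ _ Hsys Hnn HxMN HnMN E Hp).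
      - exact (reduct_transfer _ _ _ _ _ _ _ Hsys Hnn HxNM HnNM E Hp). }
    destruct HM as [[HMm HMmin] HMu]. destruct HN as [[HNm HNmin] HNu].
    assert (E1 : least C (St_reduct le PS M) = M).
    { apply HMu. apply (least_minimal C _ _ M); [|exact HMm].
      intros p h _; tauto. }
    assert (E2 : least C (St_reduct le PS M) = N).
    { apply HNu. apply (least_minimal C _ _ N); [exact Heq|exact HNm]. }
    rewrite <- E1, <- E2. reflexivity.
  - intros x y z _ _ _. unfold pref, subset. intros H1 H2.
    destruct H1 as [[A1 B1]|[A1 B1]]; destruct H2 as [[A2 B2]|[A2 B2]].
    + left. split; [intros a Ha; apply A1, A2, Ha|].
      intro Hc. apply B2. intros a Ha. apply Hc, A1, Ha.
    + left. split; [intros a Ha; apply A1, (proj2 (A2 a)), Ha|].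
      intro Hc. apply B1. intros a Ha. apply (proj2 (A2 a)), Hc, Ha.
    + left. split; [intros a Ha; apply (proj2 (A1 a)), A2, Ha|].
      intro Hc. apply B2. intros a Ha. apply Hc, (proj2 (A1 a)), Ha.
    + right. split.
      * intro a. rewrite A1. apply A2.
      * intros a Ha. apply B2, B1, Ha.
Qed.
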